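(* Consider a planar dual linear antenna array with wavelength $\lambda>0$: sub-array 1 has $N_1$ elements at positions $((n-1)d,\,0)$, $n=1,\dots,N_1$, and sub-array 2 has $N_2$ elements at positions $(x_{2,1}+(n-1)d,\; y_{2,1})$, $n=1,\dots,N_2$, with common spacing $d>0$ and $y_{2,1}\neq 0$. For a complex weight vector $\mathbf w=(w_{m,n})$ (not identically zero), the beam pattern is $$f_{\mathbf w}(\theta)=\frac{\sum_{n=1}^{N_1} w_{1,n}e^{j2\pi(n-1)d\sin\theta/\lambda}+e^{j2\pi(x_{2,1}\sin\theta+y_{2,1}\cos\theta)/\lambda}\sum_{n=1}^{N_2} w_{2,n}e^{j2\pi(n-1)d\sin\theta/\lambda}}{\sum_{n=1}^{N_1}|w_{1,n}|+\sum_{n=1}^{N_2}|w_{2,n}|}.$$ Suppose that for all $p\in\mathbb Z\setminus\{0\}$ and all $q\in\mathbb Z$, $$\left(\frac{p}{d/\lambda}\right)^2+\left(\frac{q\,d/\lambda-p\,x_{2,1}/\lambda}{(d/\lambda)(y_{2,1}/\lambda)}\right)^2>4 .$$ Then the beam pattern is not periodic: for no $\theta\in[0,2\pi)$ does there exist an angle $\mathfrak M(\theta)\neq\theta$ with $f_{\mathbf w}(\theta)=f_{\mathbf w}(\mathfrak M(\theta))$ for every weight vector $\mathbf w$. In particular, no grating lobes exist.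
   Context: Angles $\theta$ parametrize far-field directions in the plane via the unit vector $(\sin\theta,\cos\theta)$. Definition (principle of grating lobes): the beam pattern $f_{\mathbf w}(\cdot)$ is called periodic (on an angular interval) if there is a mapping $\mathfrak M$ with $\mathfrak M(\theta)\neq\theta$ and $f_{\mathbf w}(\theta)=f_{\mathbf w}(\mathfrak M(\theta))$ for every weight vector $\mathbf w$ and every $\theta$ in the interval; $\mathfrak M$ is called the period mapping. If the absolute radiation maxima occur within such an interval, the pattern is said to exhibit grating lobes.
   Formalization: No nondegenerate interval [a,b] ⊆ [0,2π], rather than no single θ, admits a period mapping; 𝔐(θ) ≠ θ means differing (sin θ, cos θ); N₁, N₂ ≥ 1 and N₁ ≥ 2 or N₂ ≥ 2. Apart from conventions, each condition added here is assumed in the paper as well or is needed for the statement above to hold. *)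

(* Defs.v *)
From Stdlib Require Import Reals.
From Coquelicot Require Import Coquelicot.
Open Scope R_scope.

Definition cis (phi : R) : C := (cos phi, sin phi).

Fixpoint csum (f : nat -> C) (n : nat) : C :=
  match n with O => RtoC 0 | S k => Cplus (csum f k) (f k) end.

Fixpoint rsum (f : nat -> R) (n : nat) : R :=
  match n with O => 0 | S k => rsum f k + f k end.

(* Weight vector: w1 n = w_{1,n+1} (n < N1), w2 n = w_{2,n+1} (n < N2). *)
Definition weights_nonzero (N1 N2 : nat) (w1 w2 : nat -> C) : Prop :=
  (exists n, (n < N1)%nat /\ w1 n <> RtoC 0) \/
  (exists n, (n < N2)%nat /\ w2 n <> RtoC 0).

Definition beam (lam d x21 y21 : R) (N1 N2 : nat) (w1 w2 : nat -> C)
    (theta : R) : C :=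
  Cdiv
    (Cplus
       (csum (fun n => Cmult (w1 n) (cis (2 * PI * INR n * d * sin theta / lam))) N1)
       (Cmult (cis (2 * PI * (x21 * sin theta + y21 * cos theta) / lam))
          (csum (fun n => Cmult (w2 n) (cis (2 * PI * INR n * d * sin theta / lam))) N2)))
    (RtoC (rsum (fun n => Cmod (w1 n)) N1 + rsum (fun n => Cmod (w2 n)) N2)).

Definition distinct_dir (t1 t2 : R) : Prop :=
  sin t1 <> sin t2 \/ cos t1 <> cos t2.

Definition periodic_on (lam d x21 y21 : R) (N1 N2 : nat) (a b : R) : Prop :=
  exists M : R -> R,
    forall theta, a <= theta <= b ->
      distinct_dir (M theta) theta /\
      forall w1 w2 : nat -> C, weights_nonzero N1 N2 w1 w2 ->
        beam lam d x21 y21 N1 N2 w1 w2 theta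
        = beam lam d x21 y21 N1 N2 w1 w2 (M theta).

(* Main.v *)
Require Import Defs.
From Stdlib Require Import Reals ZArith Lra Lia Psatz Ranalysis5.
From Coquelicot Require Import Coquelicot.
Open Scope R_scope.

Lemma cis_int (x y : R) : cos x = cos y -> sin x = sin y ->
  exists k : Z, x - y = 2 * PI * IZR k.
Proof.
  intros Hc Hs.
  assert (H1 : cos (x - y) = 1).
  { rewrite cos_minus, Hc, Hs. pose proof (sin2_cos2 y). unfold Rsqr in *. lra. }
  assert (H2 : sin ((x - y)/2) = 0).
  { pose proof (cos_2a_sin ((x-y)/2)). replace (2 * ((x-y)/2)) with (x-y) in H by field.
    nra. }
  destruct (sin_eq_0_0 _ H2) as [k Hk]. exists k. lra.
Qed.

Lemma csum_trunc (f : nat -> C) (k N : nat) : (k <= N)%nat ->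
  (forall n, (k <= n)%nat -> f n = RtoC 0) -> csum f N = csum f k.
Proof.
  intros HkN Hf. induction HkN as [|N HkN IH]; [reflexivity|].
  simpl. rewrite IH, Hf by lia. destruct (csum f k) as [a b].
  unfold Cplus, RtoC; simpl. f_equal; ring.
Qed.

Lemma rsum_trunc (f : nat -> R) (k N : nat) : (k <= N)%nat ->
  (forall n, (k <= n)%nat -> f n = 0) -> rsum f N = rsum f k.
Proof.
  intros HkN Hf. induction HkN as [|N HkN IH]; [reflexivity|].
  simpl. rewrite IH, Hf by lia. ring.
Qed.

Definition W0 (n : nat) : C := if (n =? 0)%nat then RtoC 1 else RtoC 0.
Definition W01 (n : nat) : C := if (n <=? 1)%nat then RtoC 1 else RtoC 0.
Definition Wz (n : nat) : C := RtoC 0.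

Lemma csum_W0 (g : nat -> R) N : (1 <= N)%nat ->
  csum (fun n => Cmult (W0 n) (cis (g n))) N = (cos (g 0%nat), sin (g 0%nat)).
Proof.
  intros HN. rewrite (csum_trunc _ 1) by (first [exact HN | lia | intros n Hn; unfold W0;
    destruct n; [lia|]; simpl; unfold Cmult, RtoC; simpl; f_equal; ring]).
  simpl. unfold Cplus, Cmult, RtoC, cis; simpl. f_equal; ring.
Qed.

Lemma csum_W01 (g : nat -> R) N : (2 <= N)%nat ->
  csum (fun n => Cmult (W01 n) (cis (g n))) N =
    (cos (g 0%nat) + cos (g 1%nat), sin (g 0%nat) + sin (g 1%nat)).
Proof.
  intros HN. rewrite (csum_trunc _ 2) by (first [exact HN | lia | intros n Hn; unfold W01;
    destruct n as [|[|n]]; try lia; simpl; unfold Cmult, RtoC; simpl; f_equal; ring]).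
  simpl. unfold Cplus, Cmult, RtoC, cis; simpl. f_equal; ring.
Qed.

Lemma csum_Wz (g : nat -> R) N :
  csum (fun n => Cmult (Wz n) (cis (g n))) N = RtoC 0.
Proof.
  rewrite (csum_trunc _ 0) by (first [lia | intros n Hn; unfold Wz, Cmult, RtoC; simpl; f_equal; ring]).
  reflexivity.
Qed.

Lemma rsum_W0 N : (1 <= N)%nat -> rsum (fun n => Cmod (W0 n)) N = 1.
Proof.
  intros HN. rewrite (rsum_trunc _ 1) by (first [exact HN | lia | intros n Hn; unfold W0;
    destruct n; [lia|]; simpl; apply Cmod_0]).
  simpl. unfold W0; simpl. rewrite Cmod_1. ring.
Qed.

Lemma rsum_W01 N : (2 <= N)%nat -> rsum (fun n => Cmod (W01 n)) N = 2.
Proof.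
  intros HN. rewrite (rsum_trunc _ 2) by (first [exact HN | lia | intros n Hn; unfold W01;
    destruct n as [|[|n]]; try lia; simpl; apply Cmod_0]).
  simpl. unfold W01; simpl. rewrite Cmod_1. ring.
Qed.

Lemma rsum_Wz N : rsum (fun n => Cmod (Wz n)) N = 0.
Proof.
  rewrite (rsum_trunc _ 0) by (first [lia | intros n Hn; apply Cmod_0]). reflexivity.
Qed.

Lemma cdiv_inj (x y : C) (s : R) : s <> 0 -> Cdiv x (RtoC s) = Cdiv y (RtoC s) -> x = y.
Proof.
  intros Hs H. destruct x as [x1 x2], y as [y1 y2].
  unfold Cdiv, Cmult, Cinv, RtoC in H; simpl in H. injection H; intros E2 E1.
  set (D := s * (s * 1) + 0 * (0 * 1)) in *.
  assert (Hz: - 0 / D = 0) by (unfold Rdiv; ring).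
  rewrite Hz in E1, E2.
  assert (Hc : s / D <> 0).
  { unfold D. replace (s / (s * (s * 1) + 0 * (0 * 1))) with (/ s) by (field; auto). apply Rinv_neq_0_compat; auto. }
  f_equal; apply (Rmult_eq_reg_r (s / D)); auto; lra.
Qed.

Definition bet lam x21 y21 phi := 2 * PI * (x21 * sin phi + y21 * cos phi) / lam.
Definition alp lam d phi := 2 * PI * d * sin phi / lam.

Lemma g0 lam d phi : 2 * PI * INR 0 * d * sin phi / lam = 0.
Proof. simpl. unfold Rdiv. ring. Qed.
Lemma g1 lam d phi : 2 * PI * INR 1 * d * sin phi / lam = alp lam d phi.
Proof. unfold alp. simpl. unfold Rdiv. ring. Qed.

Lemma beamA lam d x21 y21 N1 N2 phi : (1 <= N1)%nat -> (1 <= N2)%nat ->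
  beam lam d x21 y21 N1 N2 W0 W0 phi =
  Cdiv (1 + cos (bet lam x21 y21 phi), sin (bet lam x21 y21 phi)) (RtoC 2).
Proof.
  intros H1 H2. unfold beam.
  rewrite !csum_W0, !rsum_W0 by auto. rewrite !g0, cos_0, sin_0.
  fold (bet lam x21 y21 phi). unfold Cplus, Cmult, cis; simpl. f_equal.
  all: try (f_equal; ring).
Qed.

Lemma beamB1 lam d x21 y21 N1 N2 phi : (2 <= N1)%nat ->
  beam lam d x21 y21 N1 N2 W01 Wz phi =
  Cdiv (1 + cos (alp lam d phi), sin (alp lam d phi)) (RtoC 2).
Proof.
  intros H1. unfold beam.
  rewrite !csum_W01, !rsum_W01, csum_Wz, rsum_Wz by auto. rewrite g0, g1, cos_0, sin_0.
  unfold Cplus, Cmult, cis, RtoC; simpl. f_equal.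
  all: try (f_equal; ring).
Qed.

Lemma beamB2 lam d x21 y21 N1 N2 phi : (2 <= N2)%nat ->
  beam lam d x21 y21 N1 N2 Wz W01 phi =
  Cdiv (cos (bet lam x21 y21 phi) * (1 + cos (alp lam d phi)) - sin (bet lam x21 y21 phi) * sin (alp lam d phi),
        cos (bet lam x21 y21 phi) * sin (alp lam d phi) + sin (bet lam x21 y21 phi) * (1 + cos (alp lam d phi))) (RtoC 2).
Proof.
  intros H1. unfold beam.
  rewrite !csum_W01, !rsum_W01, csum_Wz, rsum_Wz by auto. rewrite g0, g1, cos_0, sin_0.
  fold (bet lam x21 y21 phi).
  unfold Cplus, Cmult, cis, RtoC; simpl. f_equal.
  all: try (f_equal; ring).
Qed.

Lemma two_pts (a b : R) : 0 <= a -> a < b -> b <= 2 * PI ->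
  exists t1 t2, a <= t1 /\ t1 < t2 /\ t2 <= b /\ cos t1 <> cos t2.
Proof.
  intros Ha Hab Hb. pose proof PI_RGT_0.
  destruct (Rlt_le_dec a PI) as [HaP|HaP].
  - exists a, (Rmin b PI). pose proof (Rmin_l b PI). pose proof (Rmin_r b PI).
    assert (a < Rmin b PI) by (apply Rmin_glb_lt; lra).
    repeat split; try lra.
    pose proof (cos_decreasing_1 a (Rmin b PI)). lra.
  - exists a, b. repeat split; try lra. pose proof (cos_increasing_1 a b). lra.
Qed.

Lemma noint (lo hi : R) : lo < hi -> exists t, lo < t < hi /\ forall q : Z, t <> IZR q.
Proof.
  intros H. destruct (archimed lo) as [A1 A2].
  assert (Hu : lo < Rmin hi (IZR (up lo))) by (apply Rmin_glb_lt; lra).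
  pose proof (Rmin_l hi (IZR (up lo))) as Hu1. pose proof (Rmin_r hi (IZR (up lo))) as Hu2.
  exists ((lo + Rmin hi (IZR (up lo)))/2). split; [lra|].
  intros q Hq.
  assert (H3 : IZR (up lo) - 1 < IZR q) by lra.
  assert (H4 : IZR q < IZR (up lo)) by lra.
  rewrite <- minus_IZR in *. apply lt_IZR in H3. apply lt_IZR in H4. lia.
Qed.

Lemma exists_theta (K a b : R) : K <> 0 -> 0 <= a -> a < b -> b <= 2 * PI ->
  exists th, a <= th <= b /\ forall q : Z, K * cos th <> IZR q.
Proof.
  intros HK Ha Hab Hb.
  destruct (two_pts a b Ha Hab Hb) as (t1 & t2 & H1 & H2 & H3 & Hc).
  assert (Hcont : forall c s x, continuity_pt (fun x => s * (K * cos x - c)) x).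
  { intros c s x. apply continuity_pt_mult. apply continuity_pt_const; intros ? ?; auto.
    apply continuity_pt_minus. apply continuity_pt_mult. apply continuity_pt_const; intros ? ?; auto.
    apply continuity_cos. apply continuity_pt_const; intros ? ?; auto. }
  assert (Hne : K * cos t1 <> K * cos t2).
  { intro E. apply Hc. apply (Rmult_eq_reg_l K); auto. }
  destruct (Rlt_dec (K * cos t1) (K * cos t2)) as [Hl|Hl].
  - destruct (noint _ _ Hl) as (c & Hc1 & Hc2).
    destruct (IVT_interv (fun x => 1 * (K * cos x - c)) t1 t2) as (z & Hz & Ez).
    + intros; apply Hcont.
    + auto.
    + lra.
    + lra.
    + exists z. split; [lra|]. intros q Eq. apply (Hc2 q). lra.
  - assert (Hl' : K * cos t2 < K * cos t1) by lra.
    destruct (noint _ _ Hl') as (c & Hc1 & Hc2).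
    destruct (IVT_interv (fun x => -1 * (K * cos x - c)) t1 t2) as (z & Hz & Ez).
    + intros; apply Hcont.
    + auto.
    + lra.
    + lra.
    + exists z. split; [lra|]. intros q Eq. apply (Hc2 q). lra.
Qed.

Theorem theorem2 (lam d x21 y21 : R) (N1 N2 : nat) :
  0 < lam -> 0 < d -> y21 <> 0 ->
  (1 <= N1)%nat -> (1 <= N2)%nat -> ((2 <= N1)%nat \/ (2 <= N2)%nat) ->
  (forall p q : Z, p <> 0%Z ->
     (IZR p / (d / lam)) ^ 2
     + ((IZR q * (d / lam) - IZR p * (x21 / lam)) / ((d / lam) * (y21 / lam))) ^ 2
     > 4) ->
  forall a b : R, 0 <= a -> a < b -> b <= 2 * PI ->
    ~ periodic_on lam d x21 y21 N1 N2 a b.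
Proof.
  intros Hlam Hd Hy HN1 HN2 HN Hcond a b Ha Hab Hb [M HM].
  pose proof PI_RGT_0 as HPI.
  assert (HK : 2 * (y21 / lam) <> 0).
  { intro E. apply Hy. apply (Rmult_eq_reg_l (2 / lam)); [|apply Rgt_not_eq, Rdiv_lt_0_compat; lra].
    rewrite Rmult_0_r. rewrite <- E. field. lra. }
  destruct (exists_theta _ a b HK Ha Hab Hb) as (th & Hth & Hnq).
  destruct (HM th Hth) as [Hdist Hw].
  set (t := M th) in *.
  assert (H10 : RtoC 1 <> RtoC 0).
  { intro E. injection E. lra. }
  assert (H20 : (2:R) <> 0) by lra.
  assert (EA := Hw W0 W0 (or_introl (ex_intro _ 0%nat (conj (ltac:(lia) : (0 < N1)%nat) H10)))).
  rewrite !beamA in EA by auto.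
  apply cdiv_inj in EA; auto. injection EA as Ec Es.
  assert (Hc : cos (bet lam x21 y21 th) = cos (bet lam x21 y21 t)) by lra.
  clear Ec.
  assert (Halp : cos (alp lam d th) = cos (alp lam d t) /\ sin (alp lam d th) = sin (alp lam d t)).
  { destruct HN as [HN|HN].
    - assert (EB := Hw W01 Wz (or_introl (ex_intro _ 0%nat (conj (ltac:(lia) : (0 < N1)%nat) H10)))).
      rewrite !beamB1 in EB by auto.
      apply cdiv_inj in EB; auto. injection EB as E1 E2. split; lra.
    - assert (EB := Hw Wz W01 (or_intror (ex_intro _ 0%nat (conj (ltac:(lia) : (0 < N2)%nat) H10)))).
      rewrite !beamB2 in EB by auto.
      apply cdiv_inj in EB; auto. injection EB as E1 E2.
      rewrite <- Hc, <- Es in E1, E2.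
      pose proof (sin2_cos2 (bet lam x21 y21 th)) as S. unfold Rsqr in S.
      set (cb := cos (bet lam x21 y21 th)) in *.
      set (sb := sin (bet lam x21 y21 th)) in *.
      split.
      + assert (1 + cos (alp lam d th) = 1 + cos (alp lam d t)); [|lra].
        transitivity (cb * (cb * (1 + cos (alp lam d th)) - sb * sin (alp lam d th)) + sb * (cb * sin (alp lam d th) + sb * (1 + cos (alp lam d th)))).
        * transitivity ((sb*sb+cb*cb) * (1 + cos (alp lam d th))); [rewrite S; ring | ring].
        * rewrite E1, E2. transitivity ((sb*sb+cb*cb) * (1 + cos (alp lam d t))); [ring | rewrite S; ring].
      + transitivity (cb * (cb * sin (alp lam d th) + sb * (1 + cos (alp lam d th))) - sb * (cb * (1 + cos (alp lam d th)) - sb * sin (alp lam d th))).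
        * transitivity ((sb*sb+cb*cb) * sin (alp lam d th)); [rewrite S; ring | ring].
        * rewrite E1, E2. transitivity ((sb*sb+cb*cb) * sin (alp lam d t)); [ring | rewrite S; ring]. }
  destruct Halp as [Hca Hsa].
  destruct (cis_int _ _ Hca Hsa) as [k1 Hk1].
  destruct (cis_int _ _ Hc Es) as [k2 Hk2].
  assert (K1 : IZR k1 = d * (sin th - sin t) / lam).
  { apply (Rmult_eq_reg_l (2*PI)); [|lra]. rewrite <- Hk1. unfold alp. field. lra. }
  assert (K2 : IZR k2 = (x21 * (sin th - sin t) + y21 * (cos th - cos t)) / lam).
  { apply (Rmult_eq_reg_l (2*PI)); [|lra]. rewrite <- Hk2. unfold bet. field. lra. }
  pose proof (sin2_cos2 th) as S1. pose proof (sin2_cos2 t) as S2. unfold Rsqr in S1, S2.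
  destruct (Z.eq_dec k1 0) as [Z1|Z1].
  - subst k1.
    assert (E0 : d * (sin th - sin t) = 0).
    { transitivity (IZR 0 * lam); [rewrite K1; field; lra | simpl; ring]. }
    assert (Hs : sin th = sin t).
    { destruct (Rmult_integral _ _ E0); lra. }
    assert (Hct : cos t <> cos th).
    { destruct Hdist as [D|D]; [lra|exact D]. }
    assert (Ect : cos t = - cos th).
    { assert (P : (cos t - cos th) * (cos t + cos th) = 0) by (rewrite Hs in S1; nra).
      destruct (Rmult_integral _ _ P); lra. }
    apply (Hnq k2). rewrite K2, Hs, Ect. field. lra.
  - specialize (Hcond k1 k2 Z1).
    assert (A1 : IZR k1 / (d / lam) = sin th - sin t) by (rewrite K1; field; lra).
    assert (A2 : (IZR k2 * (d / lam) - IZR k1 * (x21 / lam)) / (d / lam * (y21 / lam)) = cos th - cos t)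
      by (rewrite K1, K2; field; lra).
    rewrite A1, A2 in Hcond.
    pose proof (pow2_ge_0 (sin th + sin t)). pose proof (pow2_ge_0 (cos th + cos t)).
    nra.
Qed.
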